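(* Fix an income $y>0$ and prices $0\le p_1'<p_1''\le y$, and consider an increase in the price of good 1 from $p_1'$ to $p_1''$. Suppose Assumptions 1 (with $U_0$ strictly increasing), 2, 3 and 4 hold. Let $\overline{p_1}$ be the minimum price $p_1\in[0,y]$ with $q_1(p_1,y)=0$. Then the equivalent variation $S^{EV}$ across the population has distribution $\Pr\{S^{EV}=0\}=1-q_1(p_1',y)$, $\Pr\{S^{EV}=\overline{p_1}-p_1'\}=q_1(p_1',y)-q_1(p_1'',y)$, $\Pr\{S^{EV}=p_1''-p_1'\}=q_1(p_1'',y)$. If instead Assumption 3 does not hold (Assumptions 1 with $U_0$ strictly increasing, 2 and 4 hold), then the consumers who switch from good 1 at price $p_1'$ to good 0 at price $p_1''$ (a proportion $q_1(p_1',y)-q_1(p_1'',y)$ of the population) have equivalent variation satisfying $y-p_1'\ge S^{EV}\ge \overline{p_1}-p_1'$.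
   Context: Two goods, $0$ (price $0$) and $1$ (price $p_1\ge0$). All consumers have common income $y>0$, choose one good and spend the remainder on a numeraire. All consumers share utility functions $U_0:(0,\infty)\to[0,\infty)$ (utility of good 0 with numeraire amount $z$) and $U_1:[0,\infty)\to[0,\infty)$ (utility of good 1 with residual numeraire $z$). Each consumer $i$ has an attention-price threshold $t_i\in(0,\infty]$; $G$ is the CDF of thresholds in the population. Consumer $i$ considers good 1 at price $p_1$ iff $p_1<t_i$ (good 0 is always considered), and chooses good 1 iff she considers it and $U_0(y)<U_1(y-p_1)$. Hence the observed choice probability is $q_{1}(p_{1},y)=\mathbb{1}\{U_{0}(y)<U_{1}(y-p_{1})\}\,(1-G(p_{1}))$. Assumption 1: (i) $U_0$ is (here strictly) increasing, $U_1$ is continuous and strictly increasing; (ii) for every $y>0$ there is $\bar p_1\in[0,y]$ with $U_0(y)\ge U_1(y-\bar p_1)$. Assumption 2: $G(0)=0$. Assumption 3: $G(t)<1$ for all finite $t$ (a positive mass of consumers pays attention at every price). Assumption 4: $q_1(p_1,y)$ is observed for all $p_1\in[p_1',y]$. Equivalent variation of consumer $i$ for the price increase from $p_1'$ to $p_1''$: if $p_1''<t_i$ (full attention), $S^{EV}$ is the solution $S$ of $\max\{U_0(y-S),U_1(y-S-p_1')\}=\max\{U_0(y),U_1(y-p_1'')\}$; if $p_1'<t_i\le p_1''$ (partial attention), it solves $\max\{U_0(y-S),U_1(y-S-p_1')\}=U_0(y)$; if $p_1'\ge t_i$ (no attention), it solves $U_0(y-S)=U_0(y)$. Probabilities $\Pr$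 refer to population proportions under $G$. *)

(* Defs.v *)
From HB Require Import structures.
From mathcomp Require Import all_boot all_order all_algebra.
From mathcomp Require Import all_classical all_reals all_analysis measurable_realfun.
Set Implicit Arguments. Unset Strict Implicit. Unset Printing Implicit Defensive.
Import Order.TTheory GRing.Theory Num.Theory.
Import numFieldNormedType.Exports.
Local Open Scope classical_set_scope.
Local Open Scope ring_scope.

(* [avail_value U0 U1 z p r] : with numeraire budget [z] and price [p] of good 1,
   the maximal utility over the goods the consumer can take equals [r], i.e.
   "max{U0(z), U1(z - p)} = r", where good 0 is available only if z > 0
   (domain of U0 is (0,oo)) and good 1 only if z - p >= 0 (domain of U1 is [0,oo)). *)
Definition avail_value (R : realType) (U0 U1 : R -> R) (z p r : R) : Prop :=
  (0 < z /\ U0 z = r /\ (0 <= z - p -> U1 (z - p) <= r)) \/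
  (0 <= z - p /\ U1 (z - p) = r /\ (0 < z -> U0 z <= r)).

(* [is_EV U0 U1 y p' p'' t S] : S is the equivalent variation of a consumer with
   attention threshold t (in (0,+oo], as an extended real) for the price increase
   p' -> p''. *)
Definition is_EV (R : realType) (U0 U1 : R -> R) (y p' p'' : R) (t : \bar R) (S : R)
  : Prop :=
  if (p''%:E < t)%E then
    avail_value U0 U1 (y - S) p' (Num.max (U0 y) (U1 (y - p'')))
  else if (p'%:E < t)%E then
    avail_value U0 U1 (y - S) p' (U0 y)
  else
    0 < y - S /\ U0 (y - S) = U0 y.

Definition cdfG (R : realType) (mu : probability (\bar R) R) (t : R) : R :=
  fine (mu [set x | (x <= t%:E)%E]).

Definition q1 (R : realType) (U0 U1 : R -> R) (mu : probability (\bar R) R)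
  (y p : R) : R :=
  (if U0 y < U1 (y - p) then 1 else 0) * (1 - cdfG mu p).

(* Main.v *)
Require Import Defs.
From HB Require Import structures.
From mathcomp Require Import all_boot all_order all_algebra.
From mathcomp Require Import all_classical all_reals all_analysis measurable_realfun.
From mathcomp Require Import lra.
Import Order.TTheory GRing.Theory Num.Theory.
Import numFieldNormedType.Exports.
Local Open Scope classical_set_scope.
Local Open Scope ring_scope.
Set Implicit Arguments. Unset Strict Implicit.

Definition smono0 (R : realType) (U0 : R -> R) :=
  forall z1 z2, 0 < z1 -> z1 < z2 -> U0 z1 < U0 z2.
Definition smono1 (R : realType) (U1 : R -> R) :=
  forall z1 z2, 0 <= z1 -> z1 < z2 -> U1 z1 < U1 z2.
Arguments smono0 {R}. Arguments smono1 {R}.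

Lemma U0inj (R : realType) (U0 : R -> R) a b : smono0 U0 ->
  0 < a -> 0 < b -> U0 a = U0 b -> a = b.
Proof.
move=> H a0 b0 e; case: (ltgtP a b) => // h.
- by have := H _ _ a0 h; lra.
- by have := H _ _ b0 h; lra.
Qed.

Lemma U0le (R : realType) (U0 : R -> R) a b : smono0 U0 ->
  0 < a -> a <= b -> U0 a <= U0 b.
Proof.
move=> H a0; rewrite le_eqVlt => /orP [/eqP -> //|h].
exact/ltW/H.
Qed.

Lemma U1inj (R : realType) (U1 : R -> R) a b : smono1 U1 ->
  0 <= a -> 0 <= b -> U1 a = U1 b -> a = b.
Proof.
move=> H a0 b0 e; case: (ltgtP a b) => // h.
- by have := H _ _ a0 h; lra.
- by have := H _ _ b0 h; lra.
Qed.

Lemma L_noatt (R : realType) (U0 : R -> R) y S : smono0 U0 -> 0 < y ->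
  (0 < y - S /\ U0 (y - S) = U0 y) <-> S = 0.
Proof.
move=> H y0; split.
- by move=> [h1 h2]; have := U0inj H h1 y0 h2; lra.
- by move=> ->; rewrite subr0.
Qed.

Lemma L_part_t (R : realType) (U0 U1 : R -> R) y p' pbar S :
  smono0 U0 -> smono1 U1 -> 0 < y -> 0 <= p' ->
  U0 y < U1 (y - p') -> U1 (y - pbar) = U0 y -> p' <= pbar -> pbar <= y ->
  avail_value U0 U1 (y - S) p' (U0 y) <-> S = pbar - p'.
Proof.
move=> H0 H1 y0 p0 f e h1 h2; split.
- case=> [[a1 [a2 a3]]|[a1 [a2 a3]]].
  + have S0 := U0inj H0 a1 y0 a2.
    have : S = 0 by lra.
    move=> S00; rewrite S00 subr0 in a3; have := a3 (ltac:(lra)); lra.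
  + have : y - S - p' = y - pbar by apply: (U1inj H1) => //; [lra | rewrite a2 e].
    lra.
- move=> ->; right.
  have -> : y - (pbar - p') - p' = y - pbar by lra.
  split; first lra.
  split => // hp; apply: U0le => //; lra.
Qed.

Lemma L_part_f (R : realType) (U0 U1 : R -> R) y p' S :
  smono0 U0 -> smono1 U1 -> 0 < y -> 0 <= p' -> p' <= y ->
  U1 (y - p') <= U0 y ->
  avail_value U0 U1 (y - S) p' (U0 y) <-> S = 0.
Proof.
move=> H0 H1 y0 p0 py f; split.
- case=> [[a1 [a2 a3]]|[a1 [a2 a3]]].
  + by have := U0inj H0 a1 y0 a2; lra.
  + case: (ltgtP S 0) => // hS.
    * have := H0 y (y - S) y0 (ltac:(lra)).
      have := a3 (ltac:(lra)); lra.
    * have := H1 _ (y - p') a1 (ltac:(lra)); lra.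
- move=> ->; left; rewrite subr0; split => //; split => //.
Qed.

Lemma L_full (R : realType) (U0 U1 : R -> R) y p' p'' S :
  smono0 U0 -> smono1 U1 -> 0 < y -> 0 <= p' -> p' < p'' -> p'' <= y ->
  U0 y < U1 (y - p'') ->
  avail_value U0 U1 (y - S) p' (U1 (y - p'')) <-> S = p'' - p'.
Proof.
move=> H0 H1 y0 p0 pp py f; split.
- case=> [[a1 [a2 a3]]|[a1 [a2 a3]]].
  + have hy : y < y - S.
      rewrite ltNge; apply/negP => hle; have := U0le H0 a1 hle; lra.
    have := H1 (y - p'') (y - S - p') (ltac:(lra)) (ltac:(lra)).
    have := a3 (ltac:(lra)); lra.
  + have hb : 0 <= y - p'' by lra.
    have := U1inj H1 a1 hb a2; lra.
- move=> ->; right.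
  have -> : y - (p'' - p') - p' = y - p'' by lra.
  split; first lra.
  split => // hp; have := U0le H0 hp (ltac:(lra) : y - (p'' - p') <= y); lra.
Qed.

Lemma L_sw (R : realType) (U0 U1 : R -> R) y p' S :
  smono0 U0 -> smono1 U1 -> 0 < y -> 0 <= p' -> p' <= y ->
  U0 y < U1 (y - p') -> avail_value U0 U1 (y - S) p' (U0 y) ->
  [/\ 0 <= S, 0 <= y - S - p' & U1 (y - S - p') = U0 y].
Proof.
move=> H0 H1 y0 p0 py f.
case=> [[a1 [a2 a3]]|[a1 [a2 a3]]].
- have S0 := U0inj H0 a1 y0 a2.
  have : S = 0 by lra.
  move=> S00; rewrite S00 subr0 in a3; have := a3 (ltac:(lra)); lra.
- split => //; rewrite leNgt; apply/negP => hS.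
  have := H0 y (y - S) y0 (ltac:(lra)).
  have := a3 (ltac:(lra)); lra.
Qed.

Lemma U1le (R : realType) (U1 : R -> R) a b : smono1 U1 ->
  0 <= a -> a <= b -> U1 a <= U1 b.
Proof.
move=> H a0; rewrite le_eqVlt => /orP [/eqP -> //|h].
exact/ltW/H.
Qed.

Lemma mle (R : realType) (mu : probability (\bar R) R) r :
  mu [set t | (t <= r%:E)%E] = (cdfG mu r)%:E.
Proof.
rewrite /cdfG fineK //; apply: fin_num_measure => //.
have -> : [set t | (t <= r%:E)%E] = [set` `]-oo, r%:E]] by apply/seteqP; split => x /=; rewrite in_itv /=.
exact: emeasurable_itv.
Qed.

Lemma mgt (R : realType) (mu : probability (\bar R) R) r :
  mu [set t | (r%:E < t)%E] = (1 - cdfG mu r)%:E.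
Proof.
have -> : [set t | (r%:E < t)%E] = ~` [set t | (t <= r%:E)%E].
  by apply/seteqP; split => x /=; [rewrite ltNge => /negP | move/negP; rewrite -ltNge].
rewrite probability_setC ?mle //.
have -> : [set t | (t <= r%:E)%E] = [set` `]-oo, r%:E]] by apply/seteqP; split => x /=; rewrite in_itv /=.
exact: emeasurable_itv.
Qed.

Lemma mbetw (R : realType) (mu : probability (\bar R) R) r1 r2 : r1 <= r2 ->
  mu [set t | (r1%:E < t)%E /\ ~ (r2%:E < t)%E] = (cdfG mu r2 - cdfG mu r1)%:E.
Proof.
move=> r12.
have -> : [set t | (r1%:E < t)%E /\ ~ (r2%:E < t)%E] = [set t | (t <= r2%:E)%E] `\` [set t | (t <= r1%:E)%E].
  apply/seteqP; split => x /=.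
    by move=> [h1 /negP]; rewrite -leNgt => h2; split => //; apply/negP; rewrite -ltNge.
  by move=> [h1 /negP]; rewrite -ltNge => h2; split => //; apply/negP; rewrite -leNgt.
have m (r : R) : measurable [set t | (t <= r%:E)%E].
  have -> : [set t | (t <= r%:E)%E] = [set` `]-oo, r%:E]] by apply/seteqP; split => x /=; rewrite in_itv /=.
  exact: emeasurable_itv.
rewrite measureD ?m ?mle ?ltry //.
have -> : [set t | (t <= r2%:E)%E] `&` [set t | (t <= r1%:E)%E] = [set t | (t <= r1%:E)%E].
  apply/seteqP; split => x /=; first by case.
  by move=> h; split => //; apply: le_trans h _; rewrite lee_fin.
rewrite EFinB -!mle; reflexivity.
exact: (le_lt_trans (probability_le1 mu (m r2)) (ltry _)).
Qed.
Lemma mnlt (R : realType) (mu : probability (\bar R) R) r :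
  mu [set t | ~ (r%:E < t)%E] = (cdfG mu r)%:E.
Proof.
rewrite -mle; congr (mu _); apply/seteqP; split => x /=.
  by move/negP; rewrite -leNgt.
by rewrite leNgt => /negP.
Qed.

Lemma cont_ext (R : realType) (U1 : R -> R) x c :
  {within [set z : R | 0 <= z], continuous U1} -> 0 <= x -> U1 x < c ->
  exists2 e : R, 0 < e & forall z, 0 <= z -> `|x - z| < e -> U1 z < c.
Proof.
move=> Hc x0 Hx.
have := (subspace_continuousP _ _).1 Hc x x0.
move=> /cvgr_lt /(_ c Hx).
rewrite /within /= => /nbhs_ballP [e /= e0 He].
exists e => // z z0 xz; apply: He => //.
Qed.

Unset Implicit Arguments. Set Strict Implicit.

Theorem theorem2 (R : realType) (U0 U1 : R -> R) (mu : probability (\bar R) R)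
  (y p' p'' pbar : R) :
  0 < y -> 0 <= p' -> p' < p'' -> p'' <= y ->
  (forall z, 0 < z -> 0 <= U0 z) ->
  (forall z1 z2, 0 < z1 -> z1 < z2 -> U0 z1 < U0 z2) ->
  (forall z, 0 <= z -> 0 <= U1 z) ->
  (forall z1 z2, 0 <= z1 -> z1 < z2 -> U1 z1 < U1 z2) ->
  {within [set z : R | 0 <= z], continuous U1} ->
  (forall y0, 0 < y0 -> exists2 pb, 0 <= pb <= y0 & U1 (y0 - pb) <= U0 y0) ->
  cdfG mu 0 = 0 ->
  0 <= pbar <= y -> q1 U0 U1 mu y pbar = 0 ->
  (forall p, 0 <= p <= y -> q1 U0 U1 mu y p = 0 -> pbar <= p) ->
  ((forall t : R, cdfG mu t < 1) ->
   forall s : R,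
     mu [set t | is_EV U0 U1 y p' p'' t s] =
       ((if s == 0 then 1 else 0) * (1 - q1 U0 U1 mu y p')
        + (if s == pbar - p' then 1 else 0) * (q1 U0 U1 mu y p' - q1 U0 U1 mu y p'')
        + (if s == p'' - p' then 1 else 0) * q1 U0 U1 mu y p'')%:E)
  /\
  (let switchers := [set t : \bar R |
        ((p'%:E < t)%E /\ U0 y < U1 (y - p')) /\
        ~ ((p''%:E < t)%E /\ U0 y < U1 (y - p''))] in
   mu switchers = (q1 U0 U1 mu y p' - q1 U0 U1 mu y p'')%:E /\
   forall t S, switchers t -> is_EV U0 U1 y p' p'' t S ->
     pbar - p' <= S <= y - p').
Proof.
move=> y0 p0 pp py U0p H0 U1p H1 Hc A1ii G0 /andP[pb0 pby] qpb pbmin.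
have H0' : smono0 U0 := H0.
have H1' : smono1 U1 := H1.
have lt'' : forall t : \bar R, (p''%:E < t)%E -> (p'%:E < t)%E.
  by move=> t; apply: lt_trans; rewrite lte_fin.
have f''f' : U0 y < U1 (y - p'') -> U0 y < U1 (y - p').
  by move=> h; apply: lt_trans h _; apply: H1; lra.
have q1z p : U1 (y - p) <= U0 y -> q1 U0 U1 mu y p = 0.
  by move=> h; rewrite /q1 ifF ?mul0r //; apply/negbTE; rewrite -leNgt.
have q1o p : U0 y < U1 (y - p) -> q1 U0 U1 mu y p = 1 - cdfG mu p.
  by move=> h; rewrite /q1 h mul1r.
have sw : forall S, U0 y < U1 (y - p') ->
    avail_value U0 U1 (y - S) p' (U0 y) -> pbar - p' <= S <= y - p'.
  move=> S f hav; have [a1 a2 a3] := L_sw H0' H1' y0 p0 (ltac:(lra)) f hav.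
  have : pbar <= S + p'.
    apply: pbmin; first by apply/andP; split; lra.
    apply: q1z; rewrite (_ : y - (S + p') = y - S - p'); last by lra.
    by rewrite a3.
  by move=> h; apply/andP; split; lra.
split.
- move=> A3 s.
  have Gpos p : 0 < 1 - cdfG mu p by have := A3 p; lra.
  have q0 p : q1 U0 U1 mu y p = 0 -> ~~ (U0 y < U1 (y - p)).
    by rewrite /q1; case: ifP => // _; rewrite mul1r; have := Gpos p; lra.
  have npb : U1 (y - pbar) <= U0 y by rewrite leNgt; apply: q0.
  have pbfacts : U0 y < U1 (y - p') -> p' < pbar /\ U1 (y - pbar) = U0 y.
    move=> f.
    have p'pb : p' < pbar.
      rewrite ltNge; apply/negP => h.
      have : U1 (y - p') <= U1 (y - pbar) by apply: U1le => //; lra.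
      lra.
    split => //.
    apply/eqP; rewrite eq_le npb /= leNgt; apply/negP => hlt.
    have [e e0 He] := cont_ext Hc (ltac:(lra) : 0 <= y - pbar) hlt.
    have [hle|hgt] := leP pbar (e / 2).
    + have : pbar <= 0.
        apply: pbmin; first by apply/andP; split; lra.
        apply: q1z; apply: ltW; apply: He; first lra.
        rewrite ltr_norml; apply/andP; split; lra.
      lra.
    + have : pbar <= pbar - e / 2.
        apply: pbmin; first by apply/andP; split; lra.
        apply: q1z; apply: ltW; apply: He; first lra.
        rewrite ltr_norml; apply/andP; split; lra.
      lra.
  pose ev (t : \bar R) : R :=
    if (p'%:E < t)%E && (U0 y < U1 (y - p')) then
      (if (p''%:E < t)%E && (U0 y < U1 (y - p'')) then p'' - p' else pbar - p')
    else 0.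
  have char t S : is_EV U0 U1 y p' p'' t S <-> S = ev t.
    rewrite /is_EV /ev.
    case: ifP => t''.
      have t' := lt'' _ t''; rewrite t' /=.
      case F'': (U0 y < U1 (y - p'')).
        rewrite (f''f' F'') /= max_r ?ltW //; exact: L_full.
      rewrite max_l; last by rewrite leNgt F''.
      case F': (U0 y < U1 (y - p')) => /=.
        have [h1 h2] := pbfacts F'; apply: L_part_t => //; lra.
      apply: L_part_f => //; first lra.
      by rewrite leNgt F'.
    case: ifP => t' /=.
      case F': (U0 y < U1 (y - p')) => /=.
        have [h1 h2] := pbfacts F'; apply: L_part_t => //; lra.
      apply: L_part_f => //; first lra.
      by rewrite leNgt F'.
    exact: L_noatt.
  have -> : [set t | is_EV U0 U1 y p' p'' t s] = [set t | ev t = s].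
    apply/seteqP; split => t /=; first by move/char => ->.
    by move=> h; apply/char; rewrite h.
  have nf (a b : R) : a != b -> (a == b) = false by move/negbTE.
  case F': (U0 y < U1 (y - p')); last first.
    have F'': (U0 y < U1 (y - p'')) = false.
      by apply/negbTE/negP => /f''f'; rewrite F'.
    rewrite (q1z p') ?(q1z p'') ?leNgt ?F' ?F'' // subrr !mulr0 !addr0 subr0 mulr1.
    have evz t : ev t = 0 by rewrite /ev F' andbF.
    case: (eqVneq s 0) => [->|ns].
      have -> : [set t | ev t = 0] = setT by apply/seteqP; split => t //= _; exact: evz.
      by rewrite probability_setT ?eqxx.
    have -> : [set t | ev t = s] = set0.
      apply/seteqP; split => t //=; rewrite evz => h.
      by case/negP: ns; rewrite h.
    by rewrite measure0.
  have [h1 h2] := pbfacts F'.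
  case F'': (U0 y < U1 (y - p'')).
    have pb'' : p'' < pbar.
      rewrite ltNge; apply/negP => h.
      have : U1 (y - p'') <= U1 (y - pbar) by apply: U1le => //; lra.
      lra.
    rewrite !q1o //.
    have E t : ev t = if (p'%:E < t)%E then
        (if (p''%:E < t)%E then p'' - p' else pbar - p') else 0.
      by rewrite /ev F' F'' !andbT.
    case: (eqVneq s 0) => [->|n0].
      rewrite ?eqxx (nf 0 (pbar - p')); last by apply/eqP; lra.
      rewrite (nf 0 (p'' - p')); last by apply/eqP; lra.
      have -> : [set t | ev t = 0] = [set t | ~ (p'%:E < t)%E].
        apply/seteqP; split => t /=; rewrite E.
          case: ifP => h; last by move=> _; apply/negP.
          by case: ifP => _ e; exfalso; lra.
        by move/negP/negbTE => ->.
      rewrite mnlt; congr (_%:E); lra.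
    case: (eqVneq s (pbar - p')) => [->|n1].
      rewrite (nf (pbar - p') (p'' - p')); last by apply/eqP; lra.
      have -> : [set t | ev t = pbar - p'] = [set t | (p'%:E < t)%E /\ ~ (p''%:E < t)%E].
        apply/seteqP; split => t /=; rewrite E.
          case: ifP => h; last by move=> e; exfalso; lra.
          case: ifP => h3 e; first by exfalso; lra.
          by split => //; rewrite h3.
        by move=> [-> /negP/negbTE ->].
      rewrite mbetw; last lra.
      congr (_%:E); lra.
    case: (eqVneq s (p'' - p')) => [->|n2].
      have -> : [set t | ev t = p'' - p'] = [set t | (p''%:E < t)%E].
        apply/seteqP; split => t /=; rewrite E.
          case: ifP => h; last by move=> e; exfalso; lra.
          by case: ifP => // h3 e; exfalso; lra.
        by move=> h; rewrite (lt'' _ h) h.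
      rewrite mgt; congr (_%:E); lra.
    have -> : [set t | ev t = s] = set0.
      apply/seteqP; split => t //=; rewrite E.
      case: ifP => h; last by move=> e; case/negP: n0; rewrite e.
      case: ifP => h3 e; first by case/negP: n2; rewrite e.
      by case/negP: n1; rewrite e.
    by rewrite measure0 !mul0r !addr0.
  rewrite q1o // (q1z p'') ?leNgt ?F'' // !mulr0 !addr0 subr0.
  have E t : ev t = if (p'%:E < t)%E then pbar - p' else 0.
    by rewrite /ev F' F'' andbT andbF.
  case: (eqVneq s 0) => [->|n0].
    rewrite ?eqxx (nf 0 (pbar - p')); last by apply/eqP; lra.
    have -> : [set t | ev t = 0] = [set t | ~ (p'%:E < t)%E].
      apply/seteqP; split => t /=; rewrite E.
        case: ifP => h; last by move=> _; apply/negP.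
        lra.
      by move/negP/negbTE => ->.
    rewrite mnlt; congr (_%:E); lra.
  case: (eqVneq s (pbar - p')) => [->|n1].
    have -> : [set t | ev t = pbar - p'] = [set t | (p'%:E < t)%E].
      apply/seteqP; split => t /=; rewrite E.
        by case: ifP => // h e; exfalso; lra.
      by move=> ->.
    by rewrite mgt mul0r mul1r add0r.
  have -> : [set t | ev t = s] = set0.
    apply/seteqP; split => t //=; rewrite E.
    case: ifP => h e; first by case/negP: n1; rewrite e.
    by case/negP: n0; rewrite e.
  rewrite measure0; congr (_%:E); lra.
- move=> switchers; split.
  + rewrite /switchers.
    case F': (U0 y < U1 (y - p')); last first.
      have F'': (U0 y < U1 (y - p'')) = false.
        by apply/negbTE/negP => /f''f'; rewrite F'.
      rewrite (q1z p') ?(q1z p'') ?leNgt ?F' ?F'' // subrr.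
      have -> : [set t : \bar R | ((p'%:E < t)%E /\ false) /\ ~ ((p''%:E < t)%E /\ false)] = set0.
        by apply/seteqP; split => t //= [[_ h] _].
      by rewrite measure0.
    case F'': (U0 y < U1 (y - p'')).
      have -> : [set t : \bar R | ((p'%:E < t)%E /\ true) /\ ~ ((p''%:E < t)%E /\ true)] =
        [set t | (p'%:E < t)%E /\ ~ (p''%:E < t)%E].
        apply/seteqP; split => t /=.
          by move=> [[h _] n]; split => // h2; apply: n.
        by move=> [h n]; split => // [[h2 _]]; apply: n.
      rewrite mbetw; last lra.
      rewrite !q1o //; congr (_%:E); lra.
    have -> : [set t : \bar R | ((p'%:E < t)%E /\ true) /\ ~ ((p''%:E < t)%E /\ false)] =
      [set t | (p'%:E < t)%E].
      apply/seteqP; split => t /=; first by move=> [[h _] _].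
      by move=> h; split => // [[_ ]].
    by rewrite mgt q1o // q1z ?leNgt ?F'' // subr0.
  + move=> t S [[t' F'] nt''].
    rewrite /is_EV; case: ifP => t''.
      have nF'' : ~~ (U0 y < U1 (y - p'')) by apply/negP => h; apply: nt''.
      rewrite max_l; last by rewrite leNgt.
      exact: sw.
    rewrite t'; exact: sw.
Qed.
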